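(* Let $\alpha\in(0,1]$, $x\in S$, $\pi\in\Pi$. The functional $\rho^\pi_{\alpha,x}: L^\infty(\Omega,\mathcal{B}(\Omega),P_x^\pi)\to\mathbb{R}$ is coherent, i.e., for all $Y_1,Y_2\in L^\infty$: (monotonicity) $Y_1\le Y_2$ a.e. implies $\rho^\pi_{\alpha,x}(Y_1)\le\rho^\pi_{\alpha,x}(Y_2)$; (subadditivity) $\rho^\pi_{\alpha,x}(Y_1+Y_2)\le \rho^\pi_{\alpha,x}(Y_1)+\rho^\pi_{\alpha,x}(Y_2)$; (translation equivariance) $\rho^\pi_{\alpha,x}(Y_1+a)=\rho^\pi_{\alpha,x}(Y_1)+a$ for $a\in\mathbb{R}$; (positive homogeneity) $\rho^\pi_{\alpha,x}(\lambda Y_1)=\lambda\rho^\pi_{\alpha,x}(Y_1)$ for $0\le\lambda<\infty$. Moreover, for every $Y\in L^\infty(\Omega,\mathcal{B}(\Omega),P_x^\pi)$, $$E_x^\pi(Y)\le \rho^\pi_{\alpha,x}(Y)\le \mathrm{CVaR}^\pi_{\alpha,x}(Y).$$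
   Context: Setting: $S$, $A$, $W$ are Borel spaces, $T\in\mathbb{N}$, $\Omega=(S\times A)^T\times S$ with Borel $\sigma$-algebra $\mathcal{B}(\Omega)$; $\omega=(x_0,u_0,\dots,x_{T-1},u_{T-1},x_T)$, $X_t(\omega)=x_t$, $U_t(\omega)=u_t$. $f:S\times A\times W\to S$ is Borel measurable, $P_D$ a distribution on $W$, and $Q(B\mid x,u)=P_D(\{d\in W: f(x,u,d)\in B\})$. $\Pi$ is the set of randomized history-dependent policies (Borel stochastic kernels $\pi_t$ on $A$ given $(S\times A)^t\times S$, $t=0,\dots,T-1$), and $P_x^\pi$ the induced probability measure on $\Omega$ with $X_0=x$, $U_t\sim\pi_t(\cdot\mid\text{history})$, $X_{t+1}\sim Q(\cdot\mid X_t,U_t)$; $E_x^\pi$ its expectation. For integrable $Y$, $\mathrm{CVaR}^\pi_{\alpha,x}(Y):=\inf_{s\in\mathbb{R}}(s+\tfrac1\alpha E_x^\pi(\max(Y-s,0)))$. For $(x,u)\in S\times A$, $\mathcal{R}_\alpha(x,u)$ is the set of Borel-measurable $\nu:S\to\mathbb{R}$ with $0\le\nu\le\alpha^{-1/T}$ $Q(\cdot\mid x,u)$-a.e. and $\int_S\nu\,\mathrm{d}Q(\cdot\mid x,u)=1$. $\mathcal{D}_\alpha$ is the set of tuples $(\xi_0,\dots,\xi_{T-1})$ where each $\xi_t(\cdot\mid\cdot,\cdot):S\times S\times A\to\mathbb{R}$ is Borel measurable and $\xi_t(\cdot\mid x,u)\in\mathcal{R}_\alpha(x,u)$ for every $(x,u)\in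 S\times A$. For $Y\in L^\infty(\Omega,\mathcal{B}(\Omega),P_x^\pi)$, $$\rho^\pi_{\alpha,x}(Y):=\sup_{(\xi_0,\dots,\xi_{T-1})\in\mathcal{D}_\alpha}\int_\Omega Y(\omega)\prod_{t=0}^{T-1}\xi_t(x_{t+1}\mid x_t,u_t)\,\mathrm{d}P_x^\pi(\omega).$$ *)

(* Defs.v *)
From HB Require Import structures.
From mathcomp Require Import all_boot all_order all_algebra.
From mathcomp Require Import all_classical all_reals all_analysis.
Set Implicit Arguments.
Unset Strict Implicit.
Unset Printing Implicit Defensive.
Import Order.TTheory GRing.Theory Num.Theory.
Local Open Scope classical_set_scope.
Local Open Scope ring_scope.

Section mdp.
Context {R : realType} {dS dA dW : measure_display}
  (S : measurableType dS) (A : measurableType dA) (W : measurableType dW).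

(* histories h_n = (x_0,u_0,...,x_{n-1},u_{n-1},x_n) in (S x A)^n x S,
   encoded as the nested product ((h_{n-1}, u_{n-1}), x_n), with the
   product sigma-algebra (= Borel sigma-algebra of the product). *)
Fixpoint histM (n : nat) : {d : measure_display & measurableType d} :=
  match n with
  | 0 => existT (fun d => measurableType d) dS S
  | n'.+1 => existT (fun d => measurableType d) _
               ((projT2 (histM n') * A) * S)%type
  end.

Definition hist (n : nat) : measurableType (projT1 (histM n)) := projT2 (histM n).

Definition last_state (n : nat) : hist n -> S :=
  match n return hist n -> S with
  | 0 => fun h => h
  | n'.+1 => fun h => h.2
  end.

Definition policy := forall t : nat, R.-pker (hist t) ~> A.

Definition Qker (f : S -> A -> W -> S) (PD : probability W R) (x : S) (u : A)
  : set S -> \bar R := pushforward PD (f x u).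

(* P_x^pi restricted to histories of length n (Ionescu-Tulcea):
   P_0 = dirac x,  P_{n+1}(B) = int P_n(dh) int pi_n(du|h) int Q(dy|x_n,u) 1_B((h,u),y) *)
Fixpoint Pxpi (f : S -> A -> W -> S) (PD : probability W R) (x : S)
  (pi : policy) (n : nat) : set (hist n) -> \bar R :=
  match n return set (hist n) -> \bar R with
  | 0 => fun B => (\1_B x)%:E
  | n'.+1 => fun B =>
      (\int[@Pxpi f PD x pi n']_h
        \int[pi n' h]_u
          \int[Qker f PD (last_state h) u]_y (\1_B ((h, u), y))%:E)%E
  end.

(* the density prod_{t=0}^{n-1} xi_t(x_{t+1} | x_t, u_t) of a history of
   length n, written recursively *)
Fixpoint weight (xi : nat -> S -> S -> A -> R) (n : nat) : hist n -> R :=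
  match n return hist n -> R with
  | 0 => fun _ => 1
  | n'.+1 => fun h =>
      weight xi h.1.1 * xi n' h.2 (last_state h.1.1) h.1.2
  end.

Definition Ralpha (f : S -> A -> W -> S) (PD : probability W R) (T : nat)
  (alpha : R) (x : S) (u : A) (nu : S -> R) : Prop :=
  measurable_fun [set: S] nu /\
  {ae Qker f PD x u, forall y, 0 <= nu y <= alpha `^ (- (T%:R)^-1)} /\
  (\int[Qker f PD x u]_y (nu y)%:E = 1)%E.

(* D_alpha : tuples (xi_0, ..., xi_{T-1}) (components of index >= T are
   irrelevant and unconstrained) *)
Definition Dalpha (f : S -> A -> W -> S) (PD : probability W R) (T : nat)
  (alpha : R) : set (nat -> S -> S -> A -> R) :=
  [set xi | forall t, (t < T)%N ->
     measurable_fun [set: S * (S * A)]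
       (fun p : S * (S * A) => xi t p.1 p.2.1 p.2.2) /\
     forall (x : S) (u : A), Ralpha f PD T alpha x u (fun y => xi t y x u)].

Section on_Omega.
Variables (f : S -> A -> W -> S) (PD : probability W R) (T : nat)
  (alpha : R) (x : S) (pi : policy).

Local Notation Omega := (hist T).
Local Notation P := (@Pxpi f PD x pi T).

Definition Linf (Y : Omega -> R) : Prop :=
  measurable_fun [set: Omega] Y /\ exists M : R, {ae P, forall w, `|Y w| <= M}.

Definition rho (Y : Omega -> R) : \bar R :=
  ereal_sup [set (\int[P]_w (Y w * weight xi w)%:E)%E | xi in Dalpha f PD T alpha].

Definition Expect (Y : Omega -> R) : \bar R := (\int[P]_w (Y w)%:E)%E.

Definition CVaR (Y : Omega -> R) : \bar R :=
  ereal_inf [set (s%:E + alpha^-1%:E * \int[P]_w (Num.max (Y w - s) 0)%:E)%E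
            | s in [set: R]].
End on_Omega.

End mdp.

(* Main.v *)
Require Import Defs.
From HB Require Import structures.
From mathcomp Require Import all_boot all_order all_algebra.
From mathcomp Require Import all_classical all_reals all_analysis.
From mathcomp Require Import measurable_realfun lra.
Import Order.TTheory GRing.Theory Num.Theory.
Local Open Scope classical_set_scope.
Local Open Scope ring_scope.

Set Implicit Arguments.
Unset Strict Implicit.
Unset Printing Implicit Defensive.

Section mkprob.
Context {R : realType} d (T : measurableType d) (g : set T -> \bar R).
Definition mkP (g0 : g set0 = 0) (gge0 : forall A, (0 <= g A)%E)
  (gsa : semi_sigma_additive g) (gT : g setT = 1%E) : set T -> \bar R := g.
Variables (g0 : g set0 = 0) (gge0 : forall A, (0 <= g A)%E)
  (gsa : semi_sigma_additive g) (gT : g setT = 1%E).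
HB.instance Definition _ := isMeasure.Build _ _ _ (mkP g0 gge0 gsa gT) g0 gge0 gsa.
HB.instance Definition _ := Measure_isProbability.Build _ _ _ (mkP g0 gge0 gsa gT) gT.
End mkprob.

Section kcst.
Context {R : realType} {d d'} {X : measurableType d} {Y : measurableType d'}.
Variable P : probability Y R.
Definition kcst : X -> {measure set Y -> \bar R} := fun _ => P.
Let mk U : measurable U -> measurable_fun [set: X] (fun x => kcst x U).
Proof. by move=> _; exact: measurable_cst. Qed.
HB.instance Definition _ := isKernel.Build _ _ _ _ _ kcst mk.
Let pk x : kcst x [set: Y] = 1%E.
Proof. exact: probability_setT. Qed.
HB.instance Definition _ := Kernel_isProbability.Build _ _ _ _ _ kcst pk.
End kcst.

Section pfm.
Context {R : realType} {d d'} {X : measurableType d} {Y : measurableType d'}.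
Definition pfm (m : {measure set X -> \bar R}) (f : X -> Y)
  (mf : measurable_fun [set: X] f) : set Y -> \bar R := pushforward m f.
Variables (m : {measure set X -> \bar R}) (f : X -> Y) (mf : measurable_fun [set: X] f).
Let pf0 : pfm m mf set0 = 0%E.
Proof. by rewrite /pfm /pushforward preimage_set0 measure0. Qed.
Let pf_ge0 A : (0 <= pfm m mf A)%E.
Proof. exact: measure_ge0. Qed.
Let pf_sa : semi_sigma_additive (pfm m mf).
Proof.
move=> F mF tF mUF; rewrite /pfm /pushforward preimage_bigcup.
apply: measure_semi_sigma_additive.
- by move=> n; rewrite -[X in measurable X]setTI; exact: mf.
- apply/trivIsetP => /= i j _ _ ij; rewrite -preimage_setI.
  by move/trivIsetP : tF => /(_ _ _ _ _ ij) ->//; rewrite preimage_set0.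
- by rewrite -preimage_bigcup -[X in measurable X]setTI; exact: mf.
Qed.
HB.instance Definition _ := isMeasure.Build _ _ _ (pfm m mf) pf0 pf_ge0 pf_sa.
End pfm.

Section kpair.
Context {R : realType} {d d'} {X : measurableType d} {Y : measurableType d'}.
Variable k : R.-pker X ~> Y.
Definition kpair : unit * X -> {measure set (X * Y) -> \bar R} :=
  fun p => pfm (k p.2) (@pair1_measurable _ _ _ _ p.2).
Let mk U : measurable U -> measurable_fun [set: unit * X] (fun x => kpair x U).
Proof.
move=> mU.
have := @measurable_fun_xsection_finite_kernel _ _ X Y R k U.
rewrite inE => /(_ mU) h.
rewrite (_ : (fun x => kpair x U) = (fun x => k x (xsection U x)) \o snd).
  exact: measurableT_comp h _.
apply/funext => -[a b]; rewrite /kpair /pfm /pushforward /=.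
congr (k b _); apply/seteqP; split => y /=; rewrite /xsection /= inE //.
Qed.
HB.instance Definition _ := isKernel.Build _ _ _ _ _ kpair mk.
Let pk x : kpair x [set: X * Y] = 1%E.
Proof. by rewrite /kpair /= /pfm /pushforward preimage_setT; exact: prob_kernel. Qed.
HB.instance Definition _ := Kernel_isProbability.Build _ _ _ _ _ kpair pk.
End kpair.

Lemma int_one {R : realType} d (X : measurableType d)
  (P : {measure set X -> \bar R}) : (\int[P]_x 1%:E = P setT)%E.
Proof. by rewrite (integral_cst P measurableT) mul1e. Qed.

Section sd.
Context {R : realType} {d d'} {X : measurableType d} {Y : measurableType d'}.
Variables (mu : probability X R) (k : R.-pker X ~> Y).
Local Open Scope ereal_scope.

Definition sdm := kcomp (@kcst R _ _ unit X mu) (kpair k) tt.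

Lemma sdm_indic B : measurable B ->
  sdm B = \int[mu]_x \int[k x]_y (\1_B (x, y))%:E.
Proof.
move=> mB; rewrite /sdm /kcomp /=; apply: eq_integral => x _.
rewrite /kpair /pfm /pushforward /= integral_indic //; first by rewrite setIT.
by rewrite -[X in measurable X]setTI; exact: pair1_measurable.
Qed.

Lemma sdm_int (g : X * Y -> \bar R) : (forall z, 0 <= g z) ->
  measurable_fun [set: X * Y] g ->
  \int[sdm]_z g z = \int[mu]_x \int[k x]_y g (x, y).
Proof.
move=> g0 mg; rewrite /sdm integral_kcomp //=; apply: eq_integral => x _.
by rewrite /kpair /pfm /= ge0_integral_pushforward // preimage_setT.
Qed.

Lemma sdmT : sdm setT = 1.
Proof.
rewrite sdm_indic //.
under eq_integral do under eq_integral do rewrite indicT /cst.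
under eq_integral do rewrite int_one prob_kernel.
rewrite int_one; exact: probability_setT.
Qed.

End sd.

Section Fstep.
Context {R : realType} d d' d'' (X : measurableType d) (A : measurableType d')
  (S : measurableType d'').
Variables (mu : probability X R) (k : R.-pker X ~> A) (q : R.-pker (X * A) ~> S).
Local Open Scope ereal_scope.

Definition nu1 : probability (X * A)%type R :=
  @mkP R _ _ (sdm mu k) (measure0 _) (measure_ge0 _)
    (@measure_semi_sigma_additive _ _ _ (sdm mu k)) (sdmT mu k).

Definition F3 (B : set ((X * A) * S)%type) :=
  \int[mu]_h \int[k h]_u \int[q (h, u)]_y (\1_B ((h, u), y))%:E.

Lemma F3_eq B : measurable B -> F3 B = sdm nu1 q B.
Proof.
move=> mB; rewrite sdm_indic //.
change (F3 B = \int[sdm mu k]_z \int[q z]_y (\1_B (z, y))%:E).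
rewrite sdm_int //.
- by move=> z; apply: integral_ge0 => y _; rewrite lee_fin.
- apply: (measurable_fun_integral_finite_kernel (fun p => (\1_B p)%:E) q).
    by move=> z; rewrite lee_fin.
  by apply/measurable_EFinP; exact: measurable_indic.
Qed.

Let F3_0 : F3 set0 = 0.
Proof. by rewrite F3_eq // measure0. Qed.

Let F3_ge0 B : 0 <= F3 B.
Proof.
by apply: integral_ge0 => h _; apply: integral_ge0 => u _;
  apply: integral_ge0 => y _; rewrite lee_fin.
Qed.

Let F3_sa : semi_sigma_additive F3.
Proof.
move=> F mF tF mUF.
rewrite F3_eq //.
rewrite (_ : (fun n => _) = (fun n => \sum_(0 <= i < n) sdm nu1 q (F i))).
  exact: measure_semi_sigma_additive.
by apply/funext => n; apply: eq_bigr => i _; rewrite F3_eq.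
Qed.

Let F3_T : F3 setT = 1.
Proof. by rewrite F3_eq // sdmT. Qed.

Definition F3m : probability ((X * A) * S)%type R := mkP F3_0 F3_ge0 F3_sa F3_T.

Lemma F3m_int (g : ((X * A) * S)%type -> \bar R) : (forall z, 0 <= g z) ->
  measurable_fun [set: ((X * A) * S)%type] g ->
  \int[F3m]_z g z = \int[mu]_h \int[k h]_u \int[q (h, u)]_y g ((h, u), y).
Proof.
move=> g0 mg.
rewrite (eq_measure_integral (sdm nu1 q)); last first.
  by move=> B mB _; exact: F3_eq.
rewrite sdm_int //.
change (\int[sdm mu k]_z \int[q z]_y g (z, y) =
  \int[mu]_h \int[k h]_u \int[q (h, u)]_y g ((h, u), y)).
rewrite sdm_int //.
- by move=> z; apply: integral_ge0 => y _.
- exact: (measurable_fun_integral_finite_kernel g q).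
Qed.

End Fstep.

Section Qk.
Context {R : realType} {dS dA dW dX : measure_display}
  {S : measurableType dS} {A : measurableType dA} {W : measurableType dW}
  {X : measurableType dX}.
Variables (f : S -> A -> W -> S)
  (mf : measurable_fun [set: (S * A) * W] (fun p => f p.1.1 p.1.2 p.2))
  (PD : probability W R) (g : X -> S) (mg : measurable_fun [set: X] g).
Local Open Scope ereal_scope.

Lemma mfxu x u : measurable_fun [set: W] (f x u).
Proof.
have -> : f x u = (fun p => f p.1.1 p.1.2 p.2) \o pair (x, u) by [].
exact: measurableT_comp mf (pair1_measurable _).
Qed.

Lemma mfg : measurable_fun [set: (X * A) * W]
  (fun p => f (g p.1.1) p.1.2 p.2).
Proof.
have -> : (fun p : (X * A) * W => f (g p.1.1) p.1.2 p.2) =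
  (fun p => f p.1.1 p.1.2 p.2) \o (fun p : (X * A) * W => ((g p.1.1, p.1.2), p.2)) by [].
apply: measurableT_comp mf _.
apply: measurable_fun_pair; last exact: measurable_snd.
apply: measurable_fun_pair.
  exact: measurableT_comp mg (measurableT_comp measurable_fst measurable_fst).
exact: measurableT_comp measurable_snd measurable_fst.
Qed.

Definition Qk (_ : measurable_fun [set: X] g) : X * A -> {measure set S -> \bar R} :=
  fun z => pfm PD (mfxu (g z.1) z.2).

Let mk U : measurable U -> measurable_fun [set: X * A] (fun z => Qk mg z U).
Proof.
move=> mU.
rewrite (_ : (fun z => Qk mg z U) = (fun z => \int[@kcst R _ _ (X * A)%type W PD z]_w
    (\1_U (f (g (z, w).1.1) (z, w).1.2 (z, w).2))%:E)).
  apply: (measurable_fun_integral_finite_kernel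
    (fun p : (X * A) * W => (\1_U (f (g p.1.1) p.1.2 p.2))%:E)).
    by move=> z; rewrite lee_fin.
  apply/measurable_EFinP; apply: measurableT_comp => //.
  exact: mfg.
apply/funext => z /=.
rewrite /kcst /Qk /pfm /pushforward /=.
rewrite -(setIT (f (g z.1) z.2 @^-1` U)) -integral_indic //.
by rewrite -[X in measurable X]setTI; exact: mfxu.
Qed.
HB.instance Definition _ := isKernel.Build _ _ _ _ _ (Qk mg) mk.
Let pk z : Qk mg z [set: S] = 1%E.
Proof. by rewrite /Qk /= /pfm /pushforward preimage_setT probability_setT. Qed.
HB.instance Definition _ := Kernel_isProbability.Build _ _ _ _ _ (Qk mg) pk.
End Qk.

Unset Implicit Arguments.
Set Strict Implicit.
Set Printing Implicit Defensive.

Lemma int_c1 {R : realType} d (T : measurableType d) (m : {measure set T -> \bar R}) (c : \bar R) :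
  m setT = 1%E -> (\int[m]_y c = c)%E.
Proof. by move=> m1; rewrite (integral_cst m measurableT) m1 mule1. Qed.

Section generic.
Context {R : realType} d (O : measurableType d) (mu : probability O R).
Local Open Scope ereal_scope.

Lemma bint (Z : O -> R) (B : R) : measurable_fun [set: O] Z ->
  (forall h, (`|Z h| <= B)%R) -> mu.-integrable [set: O] (EFin \o Z).
Proof.
move=> mZ hB; apply/integrableP; split; first exact/measurable_EFinP.
apply: (@le_lt_trans _ _ (\int[mu]_h B%:E)).
  apply: ge0_le_integral => //.
  - apply: measurableT_comp => //; exact/measurable_EFinP.
  - by move=> h _ /=; rewrite lee_fin.
rewrite int_c1 ?ltry //; exact: probability_setT.
Qed.

End generic.

Lemma sup_addr {R : realType} {I : Type} (D : set I) (g : I -> \bar R) (a : R) :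
  (ereal_sup [set g i + a%:E | i in D] = ereal_sup [set g i | i in D] + a%:E)%E.
Proof.
apply/eqP; rewrite eq_le; apply/andP; split.
  apply: ge_ereal_sup => _ [i Di <-]; apply: leeD2r.
  by apply: ereal_sup_ubound; exists i.
have h : (ereal_sup [set g i | i in D] <= ereal_sup [set g i + a%:E | i in D] - a%:E)%E.
  apply: ge_ereal_sup => _ [i Di <-].
  have -> : g i = (g i + a%:E - a%:E)%E by rewrite addeK.
  by apply: leeD2r; apply: ereal_sup_ubound; exists i.
by apply: (le_trans (leeD2r _ h)); rewrite subeK.
Qed.

Section main.
Context {R : realType} {dS dA dW : measure_display}
  {S : measurableType dS} {A : measurableType dA} {W : measurableType dW}.
Variables (f : S -> A -> W -> S)
  (mf : measurable_fun [set: (S * A) * W] (fun p => f p.1.1 p.1.2 p.2))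
  (PD : probability W R) (x : S) (pi : @policy R _ _ S A).

Local Notation P n := (@Pxpi R _ _ _ S A W f PD x pi n).
Local Notation Q := (Qker f PD).

Definition Qpr s u : set S -> \bar R := pfm PD (mfxu mf s u).
HB.instance Definition _ s u := Measure.on (Qpr s u).
Let Qpr_T s u : Qpr s u setT = 1%E.
Proof. by rewrite /Qpr /= /pfm /pushforward preimage_setT probability_setT. Qed.
HB.instance Definition _ s u := Measure_isProbability.Build _ _ _ (Qpr s u) (Qpr_T s u).

Lemma ls_meas n : measurable_fun [set: hist S A n] (@last_state _ _ S A n).
Proof. by case: n => [|n]; [exact: measurable_id | exact: measurable_snd]. Qed.


Definition Qn n := Qk mf PD (ls_meas n).

Lemma Pprob n : exists mu : probability (hist S A n) R, P n = mu.
Proof.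
elim: n => [|n [mu Emu]].
  exists (@mkP R _ _ (P 0) (measure0 (\d_x)) (measure_ge0 (\d_x))
    (@measure_semi_sigma_additive _ _ _ (\d_x)) (diracT _ x)).
  by [].
have E : P n.+1 = F3 mu (pi n) (Qn n).
  by apply/funext => B /=; rewrite Emu.
exists (F3m mu (pi n) (Qn n)).
exact: E.
Qed.



Lemma PS n B : P n.+1 B = (\int[P n]_h \int[pi n h]_u
  \int[Qpr (last_state h) u]_y (\1_B ((h, u), y))%:E)%E.
Proof. by []. Qed.

Lemma P_int n (g : hist S A n.+1 -> \bar R) : (forall z, 0 <= g z)%E ->
  measurable_fun [set: hist S A n.+1] g ->
  (\int[P n.+1]_z g z = \int[P n]_h \int[pi n h]_u
     \int[Qpr (last_state h) u]_y g ((h, u), y))%E.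
Proof.
move=> g0 mg; have [mu Emu] := Pprob n.
have E : P n.+1 = F3m mu (pi n) (Qn n) by apply/funext => B /=; rewrite Emu.
by rewrite E F3m_int // Emu.
Qed.

Lemma indicXT n (N : set (hist S A n)) (h : hist S A n) (u : A) (y : S) :
  \1_((N `*` [set: A]) `*` [set: S]) ((h, u), y) = \1_N h :> R.
Proof. by rewrite !indicE !in_setX !in_setT !andbT. Qed.

Lemma ae_step n (p : hist S A n -> Prop) (M : set (hist S A n.+1)) :
  measurable M -> {ae P n, forall h, p h} ->
  (forall h u, Qpr (last_state h) u [set y | M ((h, u), y)] = 0%E) ->
  {ae P n.+1, forall z : hist S A n.+1, p z.1.1 /\ ~ M z}.
Proof.
move=> mM [N [mN PN sub]] hQ.
have [mu Emu] := Pprob n; have [mu' Emu'] := Pprob n.+1.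
have mNT : measurable ((N `*` [set: A]) `*` [set: S]).
  exact: measurableX (measurableX mN measurableT) measurableT.
have h1 : P n.+1 ((N `*` [set: A]) `*` [set: S]) = 0%E.
  rewrite PS Emu.
  under eq_integral do under eq_integral do under eq_integral do rewrite indicXT.
  under eq_integral do under eq_integral do rewrite (int_c1 _ _ _ _ (Qpr_T _ _)).
  under eq_integral do rewrite int_c1 ?prob_kernel //.
  by rewrite integral_indic // setIT; move: PN; rewrite Emu.
have h2 : P n.+1 M = 0%E.
  rewrite PS Emu; apply: integral0_eq => h _; apply: integral0_eq => u _.
  rewrite integral_indic //; first by rewrite setIT; exact: hQ.
  by rewrite -[X in measurable X]setTI; exact: (pair1_measurable (h, u)).
exists (((N `*` [set: A]) `*` [set: S]) `|` M); split.
- exact: measurableU.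
- rewrite Emu' in h1 h2 *; apply/eqP; rewrite eq_le measure_ge0 andbT.
  apply: (le_trans (measureU2 _ _ _)) => //.
  rewrite -[leRHS](adde0 0%E); apply: leeD; rewrite le_eqVlt; apply/orP; left;
    apply/eqP; [exact: h1|exact: h2].
- move=> z /= /not_andP [np|/contrapT mz]; last by right.
  left; have := sub z.1.1 np; case: z {np} => [[h u] y] /=.
  by rewrite /setX /=.
Qed.


Section weights.
Variables (T : nat) (alpha : R).
Hypotheses (hT : (0 < T)%N) (halpha : 0 < alpha <= 1).

Definition cc : R := alpha `^ (- (T%:R)^-1).
Lemma cc_ge0 : 0 <= cc. Proof. exact: powR_ge0. Qed.

Definition clip (xi : nat -> S -> S -> A -> R) : nat -> S -> S -> A -> R :=
  fun t y s u => Num.min (Num.max (xi t y s u) 0) cc.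

Lemma clip_ge0 xi t y s u : 0 <= clip xi t y s u.
Proof. by rewrite /clip le_min le_max lexx orbT cc_ge0. Qed.

Lemma clip_le xi t y s u : clip xi t y s u <= cc.
Proof. by rewrite /clip ge_min lexx orbT. Qed.

Lemma clip_id xi t y s u : 0 <= xi t y s u <= cc -> clip xi t y s u = xi t y s u.
Proof. by case/andP => h0 h1; rewrite /clip max_l // min_l. Qed.

Definition jm (xi : nat -> S -> S -> A -> R) t :=
  measurable_fun [set: S * (S * A)] (fun p : S * (S * A) => xi t p.1 p.2.1 p.2.2).

Lemma jm_clip xi t : jm xi t -> jm (clip xi) t.
Proof.
move=> h; rewrite /jm /clip.
apply: measurable_minr; last exact: measurable_cst.
by apply: measurable_maxr => //; exact: measurable_cst.
Qed.

Lemma wmeas xi n : (forall t, (t < n)%N -> jm xi t) ->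
  measurable_fun [set: hist S A n] (weight xi (n:=n)).
Proof.
elim: n => [|n IH] hj; first exact: measurable_cst.
have -> : weight xi (n:=n.+1) = (fun z : hist S A n.+1 =>
  weight xi (n:=n) z.1.1 * xi n z.2 (last_state z.1.1) z.1.2) by [].
apply: measurable_funM.
  apply: measurableT_comp (IH _) (measurableT_comp measurable_fst measurable_fst).
  by move=> t tn; apply: hj; exact: ltnW.
have -> : (fun z : hist S A n.+1 => xi n z.2 (last_state z.1.1) z.1.2) =
  (fun p : S * (S * A) => xi n p.1 p.2.1 p.2.2) \o
  (fun z : hist S A n.+1 => (z.2, (last_state z.1.1, z.1.2))) by [].
apply: measurableT_comp (hj n (ltnSn n)) _.
apply: measurable_fun_pair; first exact: measurable_snd.
apply: measurable_fun_pair.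
  exact: measurableT_comp (ls_meas n) (measurableT_comp measurable_fst measurable_fst).
exact: measurableT_comp measurable_snd measurable_fst.
Qed.

Lemma wclip_bnd xi n (h : hist S A n) :
  0 <= weight (clip xi) h <= cc ^+ n.
Proof.
elim: n h => [|n IH] h /=; first by rewrite ler01 lexx.
have /andP[a0 a1] := IH h.1.1.
rewrite mulr_ge0 ?clip_ge0 //= exprSr ler_pM ?clip_ge0 ?clip_le //.
Qed.


Lemma jm_comp xi n : jm xi n ->
  measurable_fun [set: hist S A n.+1]
    (fun z : hist S A n.+1 => xi n z.2 (last_state z.1.1) z.1.2).
Proof.
move=> hj.
have -> : (fun z : hist S A n.+1 => xi n z.2 (last_state z.1.1) z.1.2) =
  (fun p : S * (S * A) => xi n p.1 p.2.1 p.2.2) \o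
  (fun z : hist S A n.+1 => (z.2, (last_state z.1.1, z.1.2))) by [].
apply: measurableT_comp hj _.
apply: measurable_fun_pair; first exact: measurable_snd.
apply: measurable_fun_pair.
  exact: measurableT_comp (ls_meas n) (measurableT_comp measurable_fst measurable_fst).
exact: measurableT_comp measurable_snd measurable_fst.
Qed.

Lemma clip_int xi t s u : Dalpha f PD T alpha xi -> (t < T)%N ->
  (\int[Qpr s u]_y (clip xi t y s u)%:E = 1)%E.
Proof.
move=> hxi tT; have [_ /(_ s u) [mxi [aexi int1]]] := hxi t tT.
have aexi' : {ae Qpr s u, forall y, 0 <= xi t y s u <= cc} := aexi.
rewrite (ae_eq_integral (fun y => (xi t y s u)%:E)) //.
- apply/measurable_EFinP; apply: measurable_minr; last exact: measurable_cst.
  by apply: measurable_maxr => //; exact: measurable_cst.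
- exact/measurable_EFinP.
- by apply: filterS aexi' => y /clip_id -> _.
Qed.

Lemma wae xi n : Dalpha f PD T alpha xi -> (n <= T)%N ->
  {ae P n, forall h, weight xi h = weight (clip xi) h}.
Proof.
move=> hxi; elim: n => [|n IH] nT.
  have [mu Emu] := Pprob 0; rewrite Emu; exact: aeW.
have hj : jm xi n by have [] := hxi n nT.
pose g1 := fun z : hist S A n.+1 => xi n z.2 (last_state z.1.1) z.1.2.
pose g2 := fun z : hist S A n.+1 => clip xi n z.2 (last_state z.1.1) z.1.2.
have mg1 : measurable_fun setT g1 by exact: jm_comp.
have mg2 : measurable_fun setT g2 by apply: jm_comp; exact: jm_clip.
pose M := [set z : hist S A n.+1 | g1 z != g2 z].
have mM : measurable M.
  have := measurable_funB mg1 mg2 measurableT (measurableC (measurable_set1 (0:R))).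
  rewrite setTI; congr measurable; apply/seteqP; split => z /=.
    by move=> /eqP; rewrite subr_eq0.
  by move=> h; apply/eqP; rewrite subr_eq0.
have [mu Emu] := Pprob n.
have := ae_step n (fun h => weight xi h = weight (clip xi) h) M mM
  (IH (ltnW nT)).
have hQ : forall h u, Qpr (last_state h) u [set y | M ((h, u), y)] = 0%E.
  move=> h u.
  have [_ /(_ (last_state h) u) [mxi [aexi _]]] := hxi n nT.
  have [N [mN QN sub]] := aexi.
  apply/eqP; rewrite eq_le measure_ge0 andbT.
  have <- : Qpr (last_state h) u N = 0%E := QN.
  apply: le_measure; rewrite ?inE //.
  - by rewrite -[X in measurable X]setTI; exact: (pair1_measurable (h, u)).
  - move=> y /= hy; apply: sub => /= hb; move: hy.
    by rewrite /M /g1 /g2 /= clip_id // eqxx.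
move=> /(_ hQ); have [mu' Emu'] := Pprob n.+1; rewrite Emu'.
apply: filterS => -[[h u] y] [/= e /negP].
rewrite /M /g1 /g2 /= negbK => /eqP e2.
by rewrite e e2.
Qed.

Lemma wint xi n : Dalpha f PD T alpha xi -> (n <= T)%N ->
  (\int[P n]_h (weight (clip xi) h)%:E = 1)%E.
Proof.
move=> hxi; elim: n => [|n IH] nT.
  have [mu Emu] := Pprob 0; rewrite Emu /=.
  exact: int_c1 _ _ mu _ (probability_setT mu).
have hjm : forall t, (t < n.+1)%N -> jm (clip xi) t.
  move=> t tn; apply: jm_clip; have [] := hxi t (leq_trans tn nT) => //.
rewrite P_int; last 2 first.
- by move=> z; rewrite lee_fin; have /andP[] := wclip_bnd xi _ z.
- exact/measurable_EFinP/wmeas.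
have inner : forall (h : hist S A n) u,
  (\int[Qpr (last_state h) u]_y (weight (clip xi) (n:=n.+1) ((h, u), y))%:E
   = (weight (clip xi) h)%:E)%E.
  move=> h u.
  transitivity (\int[Qpr (last_state h) u]_y
     ((weight (clip xi) h)%:E * (clip xi n y (last_state h) u)%:E))%E.
    by apply: eq_integral => y _.
  rewrite ge0_integralZl //.
  - by rewrite clip_int // mule1.
  - apply/measurable_EFinP; apply: measurable_minr; last exact: measurable_cst.
    apply: measurable_maxr => //.
    by have [_ /(_ (last_state h) u) []] := hxi n nT.
  - by move=> y _; rewrite lee_fin clip_ge0.
  - by rewrite lee_fin; have /andP[] := wclip_bnd xi _ h.
have [mu Emu] := Pprob n; rewrite Emu; rewrite Emu in IH.
under eq_integral => h _ do under eq_integral => u _ do rewrite inner.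
under eq_integral => h _ do rewrite int_c1 ?prob_kernel //.
exact: IH (ltnW nT).
Qed.

Lemma ccT : cc ^+ T = alpha^-1.
Proof.
have a0 : 0 <= alpha by case/andP: halpha => /ltW.
rewrite /cc -powR_mulrn ?powR_ge0 // -powRrM mulNr mulVf ?powRN ?powRr1 //.
by rewrite pnatr_eq0 -lt0n.
Qed.

Lemma cc_ge1 : 1 <= cc.
Proof.
rewrite -(expr_ge1 hT cc_ge0) ccT invf_ge1 //; by case/andP: halpha.
Qed.

Definition xi1 : nat -> S -> S -> A -> R := fun _ _ _ _ => 1.

Lemma xi1_D : Dalpha f PD T alpha xi1.
Proof.
move=> t tT; split; first exact: measurable_cst.
move=> s u; split; first exact: measurable_cst.
split.
  change {ae Qpr s u, forall y, 0 <= xi1 t y s u <= cc}.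
  by apply: aeW => y; rewrite /xi1 ler01 cc_ge1.
change (\int[Qpr s u]_y (xi1 t y s u)%:E = 1)%E.
by rewrite /xi1 (int_c1 _ _ (Qpr s u)) //; exact: Qpr_T.
Qed.

Lemma weight1 n (h : hist S A n) : weight xi1 h = 1.
Proof. by elim: n h => [|n IH] h //=; rewrite IH mulr1. Qed.


Section final.
Variables (mu : probability (hist S A T) R) (Emu : P T = mu).
Local Open Scope ereal_scope.

Definition wc xi := weight (clip xi) (n:=T).

Lemma wc_bnd xi h : (0 <= wc xi h <= alpha^-1)%R.
Proof. by rewrite -ccT; exact: wclip_bnd. Qed.

Lemma jmD xi t : Dalpha f PD T alpha xi -> (t < T)%N -> jm xi t.
Proof. by move=> hxi tT; have [] := hxi t tT. Qed.

Lemma wc_meas xi : Dalpha f PD T alpha xi -> measurable_fun setT (wc xi).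
Proof. by move=> hxi; apply: wmeas => t tT; apply: jm_clip; exact: jmD. Qed.

Lemma wc_int xi : Dalpha f PD T alpha xi -> \int[mu]_h (wc xi h)%:E = 1.
Proof. by move=> hxi; rewrite -Emu; exact: wint. Qed.

Definition JT (Y : hist S A T -> R) xi := \int[P T]_h (Y h * weight xi h)%:E.
Definition Jc (Z : hist S A T -> R) xi := \int[mu]_h (Z h * wc xi h)%:E.

Lemma transfer Y Z xi : measurable_fun setT Y -> measurable_fun setT Z ->
  Dalpha f PD T alpha xi -> {ae mu, forall h, Y h = Z h} -> JT Y xi = Jc Z xi.
Proof.
move=> mY mZ hxi hae; rewrite /JT /Jc Emu.
apply: ae_eq_integral => //.
- apply/measurable_EFinP; apply: measurable_funM => //.
  by apply: wmeas => t tT; exact: jmD.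
- by apply/measurable_EFinP; apply: measurable_funM => //; exact: wc_meas.
- have := wae xi T hxi (leqnn T); rewrite Emu => hw.
  by apply: filterS2 hae hw => h e1 e2 _; rewrite e1 e2.
Qed.

Definition bnd (Z : hist S A T -> R) := exists B, forall h, (`|Z h| <= B)%R.

Lemma Jc_int Z xi : measurable_fun setT Z -> bnd Z -> Dalpha f PD T alpha xi ->
  mu.-integrable setT (EFin \o (fun h => Z h * wc xi h)%R).
Proof.
move=> mZ [B hB] hxi; apply: (@bint R _ _ mu _ (B * alpha^-1)).
  by apply: measurable_funM => //; exact: wc_meas.
move=> h; rewrite normrM; have /andP[w0 w1] := wc_bnd xi h.
rewrite (ger0_norm w0) ler_pM //.
Qed.

Lemma Jc_le Z1 Z2 xi : measurable_fun setT Z1 -> measurable_fun setT Z2 ->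
  bnd Z1 -> bnd Z2 -> Dalpha f PD T alpha xi ->
  (forall h, Z1 h <= Z2 h)%R -> Jc Z1 xi <= Jc Z2 xi.
Proof.
move=> m1 m2 b1 b2 hxi le12; apply: le_integral => //.
- exact: Jc_int.
- exact: Jc_int.
- move=> h _; rewrite lee_fin ler_wpM2r //.
  by have /andP[] := wc_bnd xi h.
Qed.

Lemma Jc_add Z1 Z2 xi : measurable_fun setT Z1 -> measurable_fun setT Z2 ->
  bnd Z1 -> bnd Z2 -> Dalpha f PD T alpha xi ->
  Jc (fun h => Z1 h + Z2 h)%R xi = Jc Z1 xi + Jc Z2 xi.
Proof.
move=> m1 m2 b1 b2 hxi; rewrite /Jc -integralD_EFin //; last 2 first.
- exact: Jc_int.
- exact: Jc_int.
by apply: eq_integral => h _ /=; rewrite mulrDl.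
Qed.

Lemma Jc_scale (r : R) Z xi : measurable_fun setT Z -> bnd Z ->
  Dalpha f PD T alpha xi -> Jc (fun h => r * Z h)%R xi = r%:E * Jc Z xi.
Proof.
move=> mZ bZ hxi; rewrite /Jc -integralZl //; last exact: Jc_int.
by apply: eq_integral => h _ /=; rewrite -mulrA EFinM.
Qed.

Lemma Jc_cst (a : R) xi : Dalpha f PD T alpha xi -> Jc (fun _ => a) xi = a%:E.
Proof.
move=> hxi.
have -> : Jc (fun _ => a) xi = Jc (fun h => a * 1)%R xi.
  by congr Jc; apply/funext => h; rewrite mulr1.
rewrite Jc_scale //; last by exists 1%R => h; rewrite normr1.
rewrite /Jc; under eq_integral do rewrite mul1r.
by rewrite wc_int // mule1.
Qed.

Definition LinfT Y := Linf f PD x pi (T := T) Y.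

Lemma Linf_clamp Y : LinfT Y -> measurable_fun setT Y /\ exists (Z : hist S A T -> R) (M : R),
  [/\ measurable_fun setT Z, (0 <= M)%R, (forall h, `|Z h| <= M)%R &
    {ae mu, forall h, Y h = Z h}].
Proof.
move=> [mY [M hM]]; split => //.
pose M' := Num.max M 0%R.
have M'0 : (0 <= M')%R by rewrite /M' le_max lexx orbT.
exists (fun h => Num.max (Num.min (Y h) M') (- M')%R), M'; split => //.
- apply: measurable_maxr; last exact: measurable_cst.
  by apply: measurable_minr => //; exact: measurable_cst.
- move=> h; rewrite ler_norml le_max lexx orbT /= ge_max ge_min lexx orbT /=.
  by apply: (le_trans _ M'0); rewrite oppr_le0.
- rewrite Emu in hM; apply: filterS hM => h; rewrite ler_norml => /andP[h1 h2].
  have hM' : (M <= M')%R by rewrite /M' le_max lexx.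
  rewrite min_l; last exact: le_trans hM'.
  rewrite max_l //; apply: le_trans h1; by rewrite lerN2.
Qed.

Lemma bnd_cst a : bnd (fun _ => a).
Proof. by exists `|a|%R. Qed.

Lemma bnd_of Z M : (forall h, `|Z h| <= M)%R -> bnd Z.
Proof. by exists M. Qed.

Lemma JT_bnd Y : LinfT Y -> exists M : R, forall xi, Dalpha f PD T alpha xi ->
  (- M)%:E <= JT Y xi <= M%:E.
Proof.
move=> /Linf_clamp [mY [Z [M [mZ M0 hZ hae]]]]; exists M => xi hxi.
rewrite (transfer Y Z xi mY mZ hxi hae) -(Jc_cst (- M)%R xi hxi) -(Jc_cst M xi hxi).
apply/andP; split; apply: Jc_le => //; try exact: measurable_cst;
  try exact: bnd_cst; try exact: bnd_of hZ;
  by move=> h; have := hZ h; rewrite ler_norml => /andP[].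
Qed.

Definition RH Y := ereal_sup [set JT Y xi | xi in Dalpha f PD T alpha].

Lemma JT_ub Y xi : Dalpha f PD T alpha xi -> JT Y xi <= RH Y.
Proof. by move=> hxi; apply: ereal_sup_ubound; exists xi. Qed.

Lemma RH_fin Y : LinfT Y -> RH Y \is a fin_num.
Proof.
move=> LY; have [M hM] := JT_bnd Y LY.
rewrite fin_numElt; apply/andP; split.
  apply: (@lt_le_trans _ _ (- M)%:E); first exact: ltNyr.
  apply: le_trans (JT_ub Y xi1 xi1_D).
  by have /andP[] := hM _ xi1_D.
apply: (@le_lt_trans _ _ M%:E); last exact: ltry.
by apply: ge_ereal_sup => _ [xi hxi <-]; have /andP[] := hM _ hxi.
Qed.

Lemma RH_mono Y1 Y2 : LinfT Y1 -> LinfT Y2 ->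
  {ae P T, forall w, (Y1 w <= Y2 w)%R} -> RH Y1 <= RH Y2.
Proof.
move=> /(Linf_clamp Y1) [mY1 [Z1 [M1 [mZ1 M10 hZ1 hae1]]]].
move=> /(Linf_clamp Y2) [mY2 [Z2 [M2 [mZ2 M20 hZ2 hae2]]]].
rewrite Emu => hle.
pose Z := fun h => Num.min (Z1 h) (Z2 h).
have mZ : measurable_fun setT Z by exact: measurable_minr.
have bZ : bnd Z.
  exists (M1 + M2)%R => h; rewrite /Z; have [|] := leP (Z1 h) (Z2 h) => e.
    by rewrite (le_trans (hZ1 h)) // lerDl.
  by rewrite (le_trans (hZ2 h)) // lerDr.
have haeZ : {ae mu, forall h, Y1 h = Z h}.
  have h2 : {ae mu, forall h, Y2 h = Z2 h /\ (Y1 h <= Y2 h)%R}.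
    by apply: filterS2 hae2 hle => h a b; split.
  by apply: filterS2 hae1 h2 => h e1 [e2 e3]; rewrite /Z -e1 -e2 min_l.
apply: ge_ereal_sup => _ [xi hxi <-].
rewrite (transfer Y1 Z xi mY1 mZ hxi haeZ).
apply: le_trans (JT_ub Y2 xi hxi).
rewrite (transfer Y2 Z2 xi mY2 mZ2 hxi hae2).
apply: Jc_le => //; first exact: bnd_of hZ2.
by move=> h; rewrite /Z ge_min lexx orbT.
Qed.

Lemma RH_sub Y1 Y2 : LinfT Y1 -> LinfT Y2 ->
  RH (fun w => Y1 w + Y2 w)%R <= RH Y1 + RH Y2.
Proof.
move=> /(Linf_clamp Y1) [mY1 [Z1 [M1 [mZ1 M10 hZ1 hae1]]]].
move=> /(Linf_clamp Y2) [mY2 [Z2 [M2 [mZ2 M20 hZ2 hae2]]]].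
have mY : measurable_fun setT (fun w => Y1 w + Y2 w)%R by exact: measurable_funD.
have mZ : measurable_fun setT (fun w => Z1 w + Z2 w)%R by exact: measurable_funD.
have hae : {ae mu, forall h, (Y1 h + Y2 h = Z1 h + Z2 h)%R}.
  by apply: filterS2 hae1 hae2 => h -> ->.
apply: ge_ereal_sup => _ [xi hxi <-].
rewrite (transfer _ _ xi mY mZ hxi hae) Jc_add //; try exact: bnd_of.
rewrite -(transfer Y1 Z1 xi mY1 mZ1 hxi hae1) -(transfer Y2 Z2 xi mY2 mZ2 hxi hae2).
by apply: leeD; exact: JT_ub.
Qed.

Lemma RH_transl Y (a : R) : LinfT Y -> RH (fun w => Y w + a)%R = RH Y + a%:E.
Proof.
move=> /(Linf_clamp Y) [mY [Z [M [mZ M0 hZ hae]]]].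
rewrite /RH -sup_addr; congr ereal_sup; apply: eq_imagel => xi hxi.
have mYa : measurable_fun setT (fun w => Y w + a)%R.
  by apply: measurable_funD => //; exact: measurable_cst.
have mZa : measurable_fun setT (fun w => Z w + a)%R.
  by apply: measurable_funD => //; exact: measurable_cst.
have haea : {ae mu, forall h, (Y h + a = Z h + a)%R}.
  by apply: filterS hae => h ->.
rewrite (transfer _ _ xi mYa mZa hxi haea) Jc_add //; try exact: bnd_cst;
  try exact: bnd_of hZ.
by rewrite Jc_cst // (transfer Y Z xi mY mZ hxi hae).
Qed.

Lemma RH_hom Y (l : R) : LinfT Y -> (0 <= l)%R ->
  RH (fun w => l * Y w)%R = l%:E * RH Y.
Proof.
move=> /(Linf_clamp Y) [mY [Z [M [mZ M0 hZ hae]]]] l0.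
rewrite /RH -ereal_supZl //; last first.
  by apply/set0P; exists (JT Y xi1); exists xi1 => //; exact: xi1_D.
have mYl : measurable_fun setT (fun w => l * Y w)%R.
  by apply: measurable_funM => //; exact: measurable_cst.
have mZl : measurable_fun setT (fun w => l * Z w)%R.
  by apply: measurable_funM => //; exact: measurable_cst.
have hael : {ae mu, forall h, (l * Y h = l * Z h)%R}.
  by apply: filterS hae => h ->.
have e xi : Dalpha f PD T alpha xi -> JT (fun w => l * Y w)%R xi = l%:E * JT Y xi.
  move=> hxi; rewrite (transfer _ _ xi mYl mZl hxi hael) Jc_scale //.
    by rewrite (transfer Y Z xi mY mZ hxi hae).
  exact: bnd_of hZ.
congr ereal_sup; apply/seteqP; split.
  by move=> _ [xi hxi <-]; exists (JT Y xi); [exists xi|rewrite e].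
by move=> _ [_ [xi hxi <-] <-]; exists xi => //; rewrite e.
Qed.

Lemma RH_E Y : LinfT Y -> Expect f PD x pi Y <= RH Y.
Proof.
move=> LY; apply: le_trans (JT_ub Y xi1 xi1_D).
rewrite le_eqVlt; apply/orP; left; apply/eqP.
rewrite /Expect /JT Emu; apply: eq_integral => h _.
by rewrite weight1 mulr1.
Qed.

Lemma RH_CVaR Y : LinfT Y -> RH Y <= CVaR f PD alpha x pi Y.
Proof.
move=> /(Linf_clamp Y) [mY [Z [M [mZ M0 hZ hae]]]].
have a0 : (0 < alpha)%R by case/andP: halpha.
rewrite /CVaR; apply: le_ereal_inf_tmp => _ [s _ <-].
apply: ge_ereal_sup => _ [xi hxi <-].
rewrite (transfer Y Z xi mY mZ hxi hae).
pose G := fun h => Num.max (Z h - s)%R 0%R.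
have mG : measurable_fun setT G.
  apply: measurable_maxr; last exact: measurable_cst.
  by apply: measurable_funB => //; exact: measurable_cst.
have mZs : measurable_fun setT (fun h => Z h - s)%R.
  by apply: measurable_funB => //; exact: measurable_cst.
have bZs : bnd (fun h => Z h - s)%R.
  by exists (M + `|s|)%R => h; rewrite (le_trans (ler_normB _ _)) // lerD2r.
have bG : bnd G.
  case: bZs => B hB; exists B => h; rewrite /G.
  by have [|] := leP (Z h - s)%R 0%R => e; [rewrite normr0 (le_trans _ (hB h))|].
have e1 : \int[P T]_w (Num.max (Y w - s)%R 0%R)%:E = \int[mu]_h (G h)%:E.
  rewrite Emu; apply: ae_eq_integral => //.
  - apply/measurable_EFinP; apply: measurable_maxr; last exact: measurable_cst.
    by apply: measurable_funB => //; exact: measurable_cst.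
  - exact/measurable_EFinP.
  - by apply: filterS hae => h -> _.
rewrite e1.
have -> : Jc Z xi = Jc (fun h => s + (Z h - s))%R xi.
  by congr Jc; apply/funext => h; rewrite addrC subrK.
rewrite Jc_add //; try exact: bnd_cst.
rewrite Jc_cst //; apply: leeD2l.
apply: (@le_trans _ _ (Jc G xi)).
  apply: Jc_le => // h; rewrite /G le_max lexx //.
have iG : mu.-integrable setT (EFin \o G).
  by case: bG => B hB; exact: (@bint R _ _ mu _ B).
rewrite -integralZl //; apply: le_integral => //.
- exact: Jc_int.
- exact: integrableZl.
- move=> h _ /=; rewrite -EFinM lee_fin [X in (_ <= X)%R]mulrC ler_wpM2l //.
  + by rewrite /G le_max lexx orbT.
  + by have /andP[] := wc_bnd xi h.
Qed.

Lemma all5 :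
  let P := @Pxpi R _ _ _ S A W f PD x pi T in
  let L := Linf f PD x pi (T := T) in
  let rh := rho f PD alpha x pi (T := T) in
  (forall Y, L Y -> rh Y \is a fin_num) /\
  (forall Y1 Y2, L Y1 -> L Y2 -> {ae P, forall w, (Y1 w <= Y2 w)%R} ->
     (rh Y1 <= rh Y2)%E) /\
  (forall Y1 Y2, L Y1 -> L Y2 ->
     (rh (fun w => (Y1 w + Y2 w)%R) <= rh Y1 + rh Y2)%E) /\
  (forall Y1 (a : R), L Y1 -> rh (fun w => Y1 w + a)%R = (rh Y1 + a%:E)%E) /\
  (forall Y1 (lambda : R), L Y1 -> (0 <= lambda)%R ->
     rh (fun w => lambda * Y1 w)%R = (lambda%:E * rh Y1)%E) /\
  (forall Y, L Y ->
     (Expect f PD x pi Y <= rh Y)%E /\ (rh Y <= CVaR f PD alpha x pi Y)%E).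
Proof.
move=> P0 L rh; split; first exact: RH_fin.
split; first exact: RH_mono.
split; first exact: RH_sub.
split; first exact: RH_transl.
split; first exact: RH_hom.
by move=> Y LY; split; [exact: RH_E|exact: RH_CVaR].
Qed.

End final.

End weights.

End main.



Theorem lemma5 (R : realType) (dS dA dW : measure_display)
  (S : measurableType dS) (A : measurableType dA) (W : measurableType dW)
  (T : nat) (hT : (0 < T)%N)
  (f : S -> A -> W -> S)
  (mf : measurable_fun [set: (S * A) * W] (fun p => f p.1.1 p.1.2 p.2))
  (PD : probability W R) (alpha : R) (halpha : 0 < alpha <= 1)
  (x : S) (pi : @policy R _ _ S A) :
  let P := @Pxpi R _ _ _ S A W f PD x pi T in
  let L := Linf f PD x pi (T := T) in
  let rh := rho f PD alpha x pi (T := T) in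
  (* rho^pi_{alpha,x} is real-valued on L^infty *)
  (forall Y, L Y -> rh Y \is a fin_num) /\
  (* monotonicity *)
  (forall Y1 Y2, L Y1 -> L Y2 -> {ae P, forall w, (Y1 w <= Y2 w)%R} ->
     (rh Y1 <= rh Y2)%E) /\
  (* subadditivity *)
  (forall Y1 Y2, L Y1 -> L Y2 ->
     (rh (fun w => (Y1 w + Y2 w)%R) <= rh Y1 + rh Y2)%E) /\
  (* translation equivariance *)
  (forall Y1 (a : R), L Y1 -> rh (fun w => Y1 w + a) = (rh Y1 + a%:E)%E) /\
  (* positive homogeneity *)
  (forall Y1 (lambda : R), L Y1 -> 0 <= lambda ->
     rh (fun w => lambda * Y1 w) = (lambda%:E * rh Y1)%E) /\
  (* E_x^pi(Y) <= rho(Y) <= CVaR(Y) *)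
  (forall Y, L Y ->
     (Expect f PD x pi Y <= rh Y)%E /\ (rh Y <= CVaR f PD alpha x pi Y)%E).
Proof.
have [mu Emu] := Pprob f mf PD x pi T.
exact: (all5 f mf PD x pi T alpha hT halpha mu Emu).
Qed.
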